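(* Let $G_{20}$ be the graph with vertex set $\mathbb{Z}_{18}\cup\{x,y_0,y_1\}$ in which the vertices of $\mathbb{Z}_{18}$ form a clique, $x$ is adjacent to every element of $\mathbb{Z}_{18}$, $y_0$ is adjacent to exactly the even elements of $\mathbb{Z}_{18}$, $y_1$ to exactly the odd elements, and there are no edges among $x,y_0,y_1$. Consider the cyclic sequences $$L_0=(2, 7, 12, 16, 4, 6, 13, 10, y, 8, 9, 17, x, 1, 5, 3, 14, 11, 15),$$ $$L_1=(11, 13, 6, 2, 14, 12, 7, 9, 16, 10, y, 8, 3, 4, 17, x, 1, 15, 5),$$ $$L_2=(5, 16, 13, 14, 17, x, 1, 10, y, 8, 6, 15, 4, 7, 3, 9, 12, 2, 11).$$ For $\gamma\in\mathbb{Z}_{18}$, let the rotation at $\gamma$ be obtained from $L_{\gamma\bmod 3}$ by adding $\gamma$ (mod 18) to each numerical entry, leaving $x$ unchanged and replacing $y$ by $y_{\gamma \bmod 2}$. Then there exist rotations at $x$, $y_0$, $y_1$ such that the resulting rotation system is a triangular embedding of $G_{20}$ in the orientable surface $S_{22}$ of genus $22$.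
   Context: A rotation system on a simple graph assigns to each vertex a cyclic ordering of its neighbors and determines a cellular orientable embedding. An embedding is triangular if every face is a triangle. $S_k$ denotes the orientable surface of genus $k$. *)

(* Defs.v *)
From mathcomp Require Import all_boot.
Set Implicit Arguments. Unset Strict Implicit. Unset Printing Implicit Defensive.

(* A rotation system on graph (T, adj) assigns to each vertex v a sequence
   [rot v] listing its neighbours; it is read as a cyclic ordering
   (the successor of u around v is [next (rot v) u], path.v). *)
Definition valid_rotation (T : finType) (adj : rel T) (rot : T -> seq T) : Prop :=
  forall v, uniq (rot v) /\ (forall u, (u \in rot v) = adj v u).

Definition darts (T : finType) (adj : rel T) : {set T * T} :=
  [set d : T * T | adj d.1 d.2].

Definition face_step (T : finType) (rot : T -> seq T) (d : T * T) : T * T :=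
  (d.2, next (rot d.2) d.1).

Definition nfaces (T : finType) (adj : rel T) (rot : T -> seq T) : nat :=
  fcard (face_step rot) (mem (darts adj)).

Definition triangular (T : finType) (adj : rel T) (rot : T -> seq T) : Prop :=
  forall d, d \in darts adj -> order (face_step rot) d = 3.

(* the (cellular, orientable) embedding determined by rot lies in S_g:
   Euler's formula V - E + F = 2 - 2g, with #darts = 2E, written in nat *)
Definition embeds_in_genus (T : finType) (adj : rel T) (rot : T -> seq T) (g : nat)
  : Prop :=
  2 * (#|T| + nfaces adj rot + 2 * g) = #|darts adj| + 4.

(* vertices: inl i = i in Z_18; inr 0 = x, inr 1 = y_0, inr 2 = y_1 *)
Definition V20 : finType := ('I_18 + 'I_3)%type.

Definition vx : V20 := inr (@inord 2 0).
Definition vy (b : nat) : V20 := inr (@inord 2 (1 + b %% 2)).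

Definition adj20 : rel V20 := fun a b =>
  match a, b with
  | inl i, inl j => i != j
  | inl i, inr k => (val k == 0) || (val k == 1 + odd i)
  | inr k, inl i => (val k == 0) || (val k == 1 + odd i)
  | inr _, inr _ => false
  end.

Inductive sym := Num of nat | SX | SY.

Definition L0 : seq sym :=
  [:: Num 2; Num 7; Num 12; Num 16; Num 4; Num 6; Num 13; Num 10; SY; Num 8;
      Num 9; Num 17; SX; Num 1; Num 5; Num 3; Num 14; Num 11; Num 15].
Definition L1 : seq sym :=
  [:: Num 11; Num 13; Num 6; Num 2; Num 14; Num 12; Num 7; Num 9; Num 16; Num 10;
      SY; Num 8; Num 3; Num 4; Num 17; SX; Num 1; Num 15; Num 5].
Definition L2 : seq sym :=
  [:: Num 5; Num 16; Num 13; Num 14; Num 17; SX; Num 1; Num 10; SY; Num 8;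
      Num 6; Num 15; Num 4; Num 7; Num 3; Num 9; Num 12; Num 2; Num 11].

Definition Lsel (r : nat) : seq sym :=
  if r == 0 then L0 else if r == 1 then L1 else L2.

Definition shift_sym (gamma : nat) (s : sym) : V20 :=
  match s with
  | Num k => inl (@inord 17 ((k + gamma) %% 18))
  | SX => vx
  | SY => vy gamma
  end.

Definition rot_num (gamma : 'I_18) : seq V20 :=
  map (shift_sym gamma) (Lsel (gamma %% 3)).

Definition rot20 (rx ry0 ry1 : seq V20) (v : V20) : seq V20 :=
  match v with
  | inl gamma => rot_num gamma
  | inr k => if val k == 0 then rx else if val k == 1 then ry0 else ry1
  end.

(* Main.v *)
Require Import Defs.
From mathcomp Require Import all_boot.
From Stdlib Require Import FunctionalExtensionality.

Lemma my_lt n k : (if k < n.+1 then k else 0) < n.+1.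
Proof. by case: ifP. Qed.
Definition myinord n k : 'I_n.+1 := Ordinal (my_lt n k).
Lemma inord_my n k : @inord n k = myinord n k.
Proof.
apply: val_inj => /=; case: ifP => H; first by rewrite inordK.
by rewrite /inord /insubd insubF.
Qed.

Definition vx' : V20 := inr (myinord 2 0).
Definition vy' (b : nat) : V20 := inr (myinord 2 (1 + b %% 2)).
Definition shift_sym' (gamma : nat) (s : sym) : V20 :=
  match s with
  | Defs.Num k => inl (myinord 17 ((k + gamma) %% 18))
  | SX => vx'
  | SY => vy' gamma
  end.
Definition nv (k : nat) : V20 := inl (myinord 17 k).
Definition RX : seq V20 := map nv [:: 0; 17; 16; 15; 14; 13; 12; 11; 10; 9; 8; 7; 6; 5; 4; 3; 2; 1].
Definition RY0 : seq V20 := map nv [:: 0; 10; 2; 12; 4; 14; 6; 16; 8].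
Definition RY1 : seq V20 := map nv [:: 1; 11; 3; 13; 5; 15; 7; 17; 9].
Definition R (v : V20) : seq V20 :=
  match v with
  | inl gamma => map (shift_sym' gamma) (Lsel (gamma %% 3))
  | inr k => if val k == 0 then RX else if val k == 1 then RY0 else RY1
  end.
Lemma R_eq : rot20 RX RY0 RY1 = R.
Proof.
apply: functional_extensionality => [[g|k]] //=.
rewrite /rot_num; apply: eq_map => s; case: s => //= *; rewrite /vx /vy; by rewrite ?inord_my.
Qed.

Definition allV : seq V20 :=
  map (fun k => inl (myinord 17 k)) (iota 0 18) ++ map (fun k => inr (myinord 2 k)) (iota 0 3).
Definition dlist : seq (V20 * V20) :=
  filter (fun d => adj20 d.1 d.2) [seq (u, v) | u <- allV, v <- allV].
Lemma valid_c : all (fun v => uniq (R v) && all (fun u => (u \in R v) == adj20 v u) allV) allV.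
Proof. vm_compute. reflexivity. Qed.
Lemma sym_c : all (fun v => all (fun u => adj20 v u == adj20 u v) allV) allV.
Proof. vm_compute. reflexivity. Qed.
Lemma tri_c : all (fun d => let p := traject (face_step R) d 3 in fcycle (face_step R) p && uniq p) dlist.
Proof. vm_compute. reflexivity. Qed.
Lemma dl_c : uniq dlist && (size dlist == 378).
Proof. vm_compute. reflexivity. Qed.

Lemma memV v : v \in allV.
Proof.
rewrite mem_cat; apply/orP; case: v => i; [left|right]; apply/mapP;
  exists (val i); rewrite ?mem_iota ?ltn_ord //; congr (_ _); apply: val_inj => /=;
  by rewrite ltn_ord.
Qed.

Lemma validR v : uniq (R v) /\ (forall u, (u \in R v) = adj20 v u).
Proof.
move/allP: valid_c => /(_ v (memV v)) /andP [H1 /allP H2].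
by split => // u; apply/eqP/H2/memV.
Qed.

Lemma adj_sym u v : adj20 u v = adj20 v u.
Proof. by move/allP: sym_c => /(_ u (memV u)) /allP /(_ v (memV v)) /eqP. Qed.

Lemma mem_dlist d : (d \in dlist) = (d \in darts adj20).
Proof.
case: d => u v; rewrite /dlist mem_filter.
have -> : (u,v) \in [seq (x, y) | x <- allV, y <- allV].
  by apply: (allpairs_f (fun x y => (x, y))); apply: memV.
by rewrite andbT inE.
Qed.

Lemma card_seq (T : finType) (A : {set T}) (s : seq T) :
  uniq s -> (forall x, (x \in s) = (x \in A)) -> #|A| = size s.
Proof.
move=> U H; rewrite -(card_uniqP U); apply: eq_card => x; by rewrite H.
Qed.

Lemma card_darts : #|darts adj20| = 378.
Proof.
move/andP: dl_c => [U /eqP S].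
rewrite (@card_seq _ _ _ U mem_dlist); exact: S.
Qed.

Lemma triR : triangular adj20 R.
Proof.
move=> d Hd; rewrite -mem_dlist in Hd.
move/allP: tri_c => /(_ d Hd) /andP [C U].
by rewrite (order_cycle C U) ?size_traject //= inE eqxx.
Qed.

Lemma injF : injective (face_step R).
Proof.
move=> [a b] [a' b'] [E1 E2]; subst b'.
have := congr1 (prev (R b)) E2; rewrite !prev_next ?(validR b).1 //.
by move=> ->.
Qed.

Lemma nfR : nfaces adj20 R = 126.
Proof.
have H := @fcard_order_set _ (face_step R) injF 3 (mem (darts adj20)).
rewrite /nfaces; apply/eqP; rewrite -(eqn_pmul2r (_ : 0 < 3)) //.
rewrite [_ * 3]H ?card_darts //.
  by apply/subsetP => d Hd; rewrite inE /= (@triR d Hd).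
move=> x y /eqP <-; rewrite !inE /face_step /=.
by rewrite -(validR x.2).2 mem_next (validR x.2).2 adj_sym.
Qed.

Theorem mainTheorem3 :
  exists rx ry0 ry1 : seq V20,
    valid_rotation adj20 (rot20 rx ry0 ry1) /\
    triangular adj20 (rot20 rx ry0 ry1) /\
    embeds_in_genus adj20 (rot20 rx ry0 ry1) 22.
Proof.
exists RX, RY0, RY1; rewrite R_eq; split; [|split].
- exact: validR.
- exact: triR.
- by rewrite /embeds_in_genus nfR card_darts card_sum !card_ord.
Qed.
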